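(* Let $\{\mathbf{x}^k\}$ be generated by Algorithm 2 under the bounded-delay assumption, and let $k\ge0$. Then for any $\alpha>0$ and any $\mathbf{x}$ independent of $i_k$, $$\begin{aligned}\mathbb{E}_{i_k}\big\langle\nabla_{i_k} f(\hat{\mathbf{x}}^k),\mathbf{x}_{i_k}^{k+1}-\mathbf{x}_{i_k}\big\rangle\ge\ &\mathbb{E}_{i_k}\big[f(\mathbf{x}^{k+1})-f(\mathbf{x})\big]-\Big(1-\frac1m\Big)\big[f(\mathbf{x}^k)-f(\mathbf{x})\big]-\tfrac12\mathbb{E}_{i_k}\|\mathbf{x}^{k+1}-\mathbf{x}^k\|_{\mathbf{L}+\alpha L_c\mathbf{I}}^2\\&-\frac{\kappa L_r\tau/\alpha+2L_r\tau}{2m}\sum_{d=k-\tau}^{k-1}\|\mathbf{x}^{d+1}-\mathbf{x}^d\|^2-\frac{1}{2m}\sum_{d=k-\tau}^{k-1}\|\mathbf{x}^{d+1}-\mathbf{x}^d\|_{\mathbf{L}}^2,\end{aligned}$$ where $L_c=\max_iL_i$, $\kappa=L_r/L_c$, and $\mathbf{x}^d:=\mathbf{x}^0$ for $d<0$.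
   Context: Problem: $\min_{\mathbf{x}} F(\mathbf{x}):=f(\mathbf{x})+g(\mathbf{x})$ s.t. $\mathbf{A}\mathbf{x}=\mathbf{b}$, where $\mathbf{x}=(\mathbf{x}_1;\ldots;\mathbf{x}_m)$ with blocks $\mathbf{x}_i\in\mathbb{R}^{n_i}$, $g(\mathbf{x})=\sum_{i=1}^m g_i(\mathbf{x}_i)$, $\mathbf{A}=[\mathbf{A}_1,\ldots,\mathbf{A}_m]$ with $\mathbf{A}_i\in\mathbb{R}^{q\times n_i}$, $\mathbf{b}\in\mathbb{R}^q$; $f$ is convex and continuously differentiable, each $g_i$ is proper, convex, lower semicontinuous. $\mathbf{U}_i\mathbf{y}$ denotes the vector whose $i$-th block is $\mathbf{y}_i$ and other blocks zero; $\|\mathbf{z}\|_{\mathbf{M}}^2=\mathbf{z}^\top\mathbf{M}\mathbf{z}$. Assumption (gradient Lipschitz continuity): there are constants $L_i>0$ and $L_r$ with $\|\nabla_i f(\mathbf{x}+\mathbf{U}_i\mathbf{y})-\nabla_i f(\mathbf{x})\|\le L_i\|\mathbf{y}_i\|$ and $\|\nabla f(\mathbf{x}+\mathbf{U}_i\mathbf{y})-\nabla f(\mathbf{x})\|\le L_r\|\mathbf{y}_i\|$ for all $i,\mathbf{x},\mathbf{y}$. $\mathbf{L}=\mathrm{blkdiag}(L_1\mathbf{I}_{n_1},\ldots,L_m\mathbf{I}_{n_m})$. Algorithm 2 (async-parallel randomized primal-dual block update, as analyzed): choose $\mathbf{x}^0$, $\boldsymbol{\lambda}^0=\mathbf{0}$,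 $\mathbf{r}^0=\mathbf{A}\mathbf{x}^0-\mathbf{b}$, $\beta>0,\rho>0$, symmetric PSD $\mathbf{P}_i$. At iteration $k$, a block index $i_k\in\{1,\ldots,m\}$ and a (possibly outdated) point $\hat{\mathbf{x}}^k$ are used; $\mathbf{x}_i^{k+1}=\mathbf{x}_i^k$ for $i\ne i_k$ and $$\mathbf{x}_{i_k}^{k+1}\in\arg\min_{\mathbf{x}_{i_k}}\big\langle\nabla_{i_k} f(\hat{\mathbf{x}}^k)-\mathbf{A}_{i_k}^\top(\boldsymbol{\lambda}^k-\beta\mathbf{r}^k),\mathbf{x}_{i_k}\big\rangle+g_{i_k}(\mathbf{x}_{i_k})+\tfrac12\|\mathbf{x}_{i_k}-\mathbf{x}_{i_k}^k\|_{\mathbf{P}_{i_k}}^2;$$ then $\mathbf{r}^{k+1}=\mathbf{r}^k+\mathbf{A}_{i_k}(\mathbf{x}_{i_k}^{k+1}-\mathbf{x}_{i_k}^k)$ and $\boldsymbol{\lambda}^{k+1}=\boldsymbol{\lambda}^k-\rho\mathbf{r}^{k+1}$. Conditionally on the history before iteration $k$ (which determines $\mathbf{x}^k,\mathbf{r}^k,\boldsymbol{\lambda}^k$ and $\hat{\mathbf{x}}^k$), $i_k$ is uniformly distributed on $\{1,\ldots,m\}$; $\mathbb{E}_{i_k}$ denotes this conditional expectation, and ''$\mathbf{x}$ independent of $i_k$'' means $\mathbf{x}$ is determined by that history. Assumption (bounded delay): there is an integer $\tau\ge0$ such that $\hat{\mathbf{x}}^k=\mathbf{x}^k+\sum_{d\in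 J(k)}(\mathbf{x}^d-\mathbf{x}^{d+1})$ for some subset $J(k)\subseteq\{k-\tau,\ldots,k-1\}$. *)

(* Defs.v *)
From Stdlib Require Import Reals.
From mathcomp Require Import all_boot.
Set Implicit Arguments.
Unset Strict Implicit.
Unset Printing Implicit Defensive.

Local Open Scope R_scope.

Definition bvec (n : nat) := 'I_n -> R.
Definition vec (m : nat) (n : 'I_m -> nat) := forall i : 'I_m, bvec (n i).

Definition bdot (n : nat) (u v : bvec n) : R := \big[Rplus/R0]_(j < n) (u j * v j).
Definition bnorm2 (n : nat) (u : bvec n) : R := bdot u u.
Definition bnorm (n : nat) (u : bvec n) : R := sqrt (bnorm2 u).
Definition bsub (n : nat) (u v : bvec n) : bvec n := fun j => u j - v j.

Definition dot (m : nat) (n : 'I_m -> nat) (x y : vec n) : R :=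
  \big[Rplus/R0]_(i < m) bdot (x i) (y i).
Definition norm2 (m : nat) (n : 'I_m -> nat) (x : vec n) : R := dot x x.
Definition norm (m : nat) (n : 'I_m -> nat) (x : vec n) : R := sqrt (norm2 x).
Definition vadd (m : nat) (n : 'I_m -> nat) (x y : vec n) : vec n :=
  fun i j => x i j + y i j.
Definition vsub (m : nat) (n : 'I_m -> nat) (x y : vec n) : vec n :=
  fun i j => x i j - y i j.
Definition vscale (m : nat) (n : 'I_m -> nat) (t : R) (x : vec n) : vec n :=
  fun i j => t * x i j.

Definition Ublk (m : nat) (n : 'I_m -> nat) (i : 'I_m) (y : vec n) : vec n :=
  fun l => if l == i then y l else (fun _ => 0).

(* ||z||_M^2 for the block-diagonal M = blkdiag(w_1 I_{n_1}, ..., w_m I_{n_m}) *)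
Definition wnorm2 (m : nat) (n : 'I_m -> nat) (w : 'I_m -> R) (z : vec n) : R :=
  \big[Rplus/R0]_(i < m) (w i * bnorm2 (z i)).

Definition bquad (n : nat) (P : 'I_n -> 'I_n -> R) (z : bvec n) : R :=
  \big[Rplus/R0]_(a < n) \big[Rplus/R0]_(c < n) (z a * P a c * z c).

Definition sym_mx (n : nat) (P : 'I_n -> 'I_n -> R) : Prop :=
  forall a c, P a c = P c a.
Definition psd_mx (n : nat) (P : 'I_n -> 'I_n -> R) : Prop :=
  forall z : bvec n, 0 <= bquad P z.

Definition convex_fun (m : nat) (n : 'I_m -> nat) (f : vec n -> R) : Prop :=
  forall (x y : vec n) (t : R), 0 <= t <= 1 ->
    f (vadd (vscale t x) (vscale (1 - t) y)) <= t * f x + (1 - t) * f y.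

Definition has_gradient (m : nat) (n : 'I_m -> nat) (f : vec n -> R)
  (gradf : vec n -> vec n) : Prop :=
  forall (x : vec n) (eps : R), 0 < eps -> exists delta, 0 < delta /\
    forall y : vec n, norm (vsub y x) < delta ->
      Rabs (f y - f x - dot (gradf x) (vsub y x)) <= eps * norm (vsub y x).

Definition continuous_map (m : nat) (n : 'I_m -> nat) (G : vec n -> vec n) : Prop :=
  forall (x : vec n) (eps : R), 0 < eps -> exists delta, 0 < delta /\
    forall y : vec n, norm (vsub y x) < delta -> norm (vsub (G y) (G x)) < eps.

(* None stands for +oo *)
Definition ext_gt (v : option R) (c : R) : Prop :=
  match v with Some a => c < a | None => True end.

Definition proper_fun (n : nat) (g : bvec n -> option R) : Prop :=
  exists z a, g z = Some a.

(* convexity of the (never -oo) extended-valued function: epigraph convexity *)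
Definition convex_ext (n : nat) (g : bvec n -> option R) : Prop :=
  forall (u v : bvec n) (a c t : R), g u = Some a -> g v = Some c -> 0 <= t <= 1 ->
    exists e, g (fun j => t * u j + (1 - t) * v j) = Some e /\ e <= t * a + (1 - t) * c.

Definition lsc_ext (n : nat) (g : bvec n -> option R) : Prop :=
  forall (z : bvec n) (c : R), ext_gt (g z) c ->
    exists delta, 0 < delta /\
      forall w : bvec n, bnorm (bsub w z) < delta -> ext_gt (g w) c.

Definition Amul (q n : nat) (Ai : 'I_q -> 'I_n -> R) (z : bvec n) : 'I_q -> R :=
  fun s => \big[Rplus/R0]_(j < n) (Ai s j * z j).
Definition Atmul (q n : nat) (Ai : 'I_q -> 'I_n -> R) (v : 'I_q -> R) : bvec n :=
  fun j => \big[Rplus/R0]_(s < q) (Ai s j * v s).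
Definition Afull (m : nat) (n : 'I_m -> nat) (q : nat)
  (A : forall i : 'I_m, 'I_q -> 'I_(n i) -> R) (x : vec n) : 'I_q -> R :=
  fun s => \big[Rplus/R0]_(i < m) Amul (A i) (x i) s.

Definition is_argmin (n : nat) (c : bvec n) (g : bvec n -> option R)
  (P : 'I_n -> 'I_n -> R) (xk : bvec n) (z : bvec n) : Prop :=
  exists gz, g z = Some gz /\
    forall (w : bvec n) (gw : R), g w = Some gw ->
      bdot c z + gz + / 2 * bquad P (bsub z xk)
      <= bdot c w + gw + / 2 * bquad P (bsub w xk).

Definition x_update (m : nat) (n : 'I_m -> nat) (q : nat)
  (gradf : vec n -> vec n) (g : forall i : 'I_m, bvec (n i) -> option R)
  (A : forall i : 'I_m, 'I_q -> 'I_(n i) -> R)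
  (P : forall i : 'I_m, 'I_(n i) -> 'I_(n i) -> R) (beta : R)
  (i : 'I_m) (xk xhatk : vec n) (rk lamk : 'I_q -> R) (xnew : vec n) : Prop :=
  (forall l : 'I_m, l != i -> forall j, xnew l j = xk l j) /\
  is_argmin (fun j => gradf xhatk i j - Atmul (A i) (fun s => lamk s - beta * rk s) j)
            (g i) (P i) (xk i) (xnew i).

(* conditional expectation over i_k uniform on {1..m} *)
Definition Eik (m : nat) (Phi : 'I_m -> R) : R :=
  / INR m * \big[Rplus/R0]_(j < m) Phi j.

Definition Lmax (m : nat) (L : 'I_m -> R) : R := \big[Rmax/R0]_(i < m) L i.

(* Main.v *)
Require Import Defs.
From HB Require Import structures.
From Stdlib Require Import Reals Lra Lia FunctionalExtensionality.
From mathcomp Require Import all_boot zify.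

Local Open Scope R_scope.

HB.instance Definition _ := Monoid.isComLaw.Build R R0 Rplus (fun a b c => esym (Rplus_assoc a b c)) Rplus_comm Rplus_0_l.

Set Implicit Arguments. Unset Strict Implicit.


Section Sums.
Variables (I : Type) (r : seq I) (P : pred I).
Lemma sumD (F G : I -> R) :
  \big[Rplus/R0]_(i <- r | P i) (F i + G i) =
  \big[Rplus/R0]_(i <- r | P i) F i + \big[Rplus/R0]_(i <- r | P i) G i.
Proof. exact: big_split. Qed.
Lemma sumZ (c : R) (F : I -> R) :
  \big[Rplus/R0]_(i <- r | P i) (c * F i) = c * \big[Rplus/R0]_(i <- r | P i) F i.
Proof.
apply: (big_ind2 (fun a b => a = c * b)); first by ring.
  by move=> a b a' b' -> ->; ring.
by [].
Qed.
Lemma sum_le (F G : I -> R) : (forall i, P i -> F i <= G i) ->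
  \big[Rplus/R0]_(i <- r | P i) F i <= \big[Rplus/R0]_(i <- r | P i) G i.
Proof.
move=> H; apply: (big_ind2 (fun a b => a <= b)); first lra.
  by move=> a b a' b' ? ?; lra.
by [].
Qed.
Lemma sum_ge0 (F : I -> R) : (forall i, P i -> 0 <= F i) ->
  0 <= \big[Rplus/R0]_(i <- r | P i) F i.
Proof.
move=> H; apply: (big_ind (fun a => 0 <= a)); first lra.
  by move=> a b ? ?; lra.
by [].
Qed.
Lemma sum_lin2 (a c : R) (F G : I -> R) :
  \big[Rplus/R0]_(i <- r | P i) (a * F i + c * G i) =
  a * \big[Rplus/R0]_(i <- r | P i) F i + c * \big[Rplus/R0]_(i <- r | P i) G i.
Proof. by rewrite sumD !sumZ. Qed.
End Sums.

Lemma cs_real (a b c : R) : (forall t, 0 <= a - 2 * t * c + t * t * b) ->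
  0 <= b -> c <= sqrt a * sqrt b.
Proof.
move=> H hb.
have ha : 0 <= a by have := H 0; lra.
have hs : 0 <= sqrt a * sqrt b by apply: Rmult_le_pos; apply: sqrt_pos.
destruct (Req_dec b 0) as [b0|bn0].
- subst b. destruct (Rle_dec c 0) as [|cp]; first lra.
  have := H ((a + 1) / (2 * c)). have cpos : 0 < c by lra.
  have -> : a - 2 * ((a + 1) / (2 * c)) * c + (a + 1) / (2 * c) * ((a + 1) / (2 * c)) * 0
    = -1 by field; lra.
  lra.
- have bp : 0 < b by lra.
  have := H (c / b).
  have -> : a - 2 * (c / b) * c + c / b * (c / b) * b = a - c * c / b by field; lra.
  move=> h1.
  have h2 : c * c <= a * b.
    have : 0 <= (a - c * c / b) * b by apply: Rmult_le_pos; lra.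
    have -> : (a - c * c / b) * b = a * b - c * c by field; lra.
    lra.
  destruct (Rle_dec c 0); first lra.
  rewrite -sqrt_mult //. rewrite -(sqrt_Rsqr c); last lra.
  apply: sqrt_le_1_alt. rewrite /Rsqr. lra.
Qed.

Lemma bdot_sym n (u v : bvec n) : bdot u v = bdot v u.
Proof. by apply: eq_bigr => j _; ring. Qed.
Lemma bdot_lin n (a c : R) (u v w : bvec n) :
  bdot (fun j => a * u j + c * v j) w = a * bdot u w + c * bdot v w.
Proof.
rewrite /bdot -sum_lin2. by apply: eq_bigr => j _; ring.
Qed.
Lemma bnorm2_ge0 n (u : bvec n) : 0 <= bnorm2 u.
Proof. apply: sum_ge0 => j _. nra. Qed.
Lemma bnorm2_quad n (u v : bvec n) t :
  bnorm2 (fun j => u j - t * v j) = bnorm2 u - 2 * t * bdot u v + t * t * bnorm2 v.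
Proof.
have E : forall w : bvec n, (fun j => u j - t * v j) = (fun j => 1 * u j + (- t) * v j).
  by move=> w; apply: functional_extensionality => j; ring.
rewrite /bnorm2. have := E u. move=> ->.
rewrite (bdot_lin 1 (-t) u v) (bdot_sym u) (bdot_sym v) (bdot_lin 1 (-t) u v u) (bdot_lin 1 (-t) u v v) [bdot v u]bdot_sym.
ring.
Qed.
Lemma bdot_cs n (u v : bvec n) : bdot u v <= bnorm u * bnorm v.
Proof.
apply: cs_real; last exact: bnorm2_ge0.
move=> t. rewrite -bnorm2_quad. exact: bnorm2_ge0.
Qed.

Lemma dot_sym m (n : 'I_m -> nat) (x y : vec n) : dot x y = dot y x.
Proof. by apply: eq_bigr => i _; apply: bdot_sym. Qed.
Lemma dot_lin m (n : 'I_m -> nat) (a c : R) (x y z : vec n) :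
  dot (fun i j => a * x i j + c * y i j) z = a * dot x z + c * dot y z.
Proof.
rewrite /dot -sum_lin2. apply: eq_bigr => i _. by rewrite bdot_lin.
Qed.
Lemma norm2_ge0 m (n : 'I_m -> nat) (x : vec n) : 0 <= norm2 x.
Proof. apply: sum_ge0 => i _; exact: bnorm2_ge0. Qed.
Lemma norm2_quad m (n : 'I_m -> nat) (x y : vec n) t :
  norm2 (fun i j => x i j - t * y i j) = norm2 x - 2 * t * dot x y + t * t * norm2 y.
Proof.
have E : (fun i j => x i j - t * y i j) = (fun i j => 1 * x i j + (- t) * y i j).
  by apply: functional_extensionality_dep => i; apply: functional_extensionality => j; ring.
rewrite /norm2. move: E => ->.
rewrite (dot_lin 1 (-t) x y) (dot_sym x) (dot_sym y) (dot_lin 1 (-t) x y x) (dot_lin 1 (-t) x y y) [dot y x]dot_sym.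
ring.
Qed.
Lemma dot_cs m (n : 'I_m -> nat) (x y : vec n) : dot x y <= norm x * norm y.
Proof.
apply: cs_real; last exact: norm2_ge0.
move=> t. rewrite -norm2_quad. exact: norm2_ge0.
Qed.

Lemma Rabs_le_inv x a : Rabs x <= a -> -a <= x <= a.
Proof.
move=> h; have h1 := Rle_abs x; have h2 := Rle_abs (-x); rewrite Rabs_Ropp in h2; lra.
Qed.

Section Blocks.
Variables (m : nat) (n : 'I_m -> nat).

Lemma vec_ext (x y : vec n) : (forall i j, x i j = y i j) -> x = y.
Proof.
move=> H; apply: functional_extensionality_dep => i.
apply: functional_extensionality => j; exact: H.
Qed.

Lemma sum_single (F : 'I_m -> R) i : (forall l, l != i -> F l = 0) ->
  \big[Rplus/R0]_(l < m) F l = F i.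
Proof.
move=> H; rewrite (bigD1 i) //= big1; first by rewrite Rplus_0_r.
by move=> l hl; apply: H; exact: hl.
Qed.

Lemma bdot0r k (u : bvec k) : bdot u (fun _ => 0) = 0.
Proof. rewrite /bdot big1 // => j _; ring. Qed.

Lemma bdot_scale_r k (u v : bvec k) c : bdot u (fun j => c * v j) = c * bdot u v.
Proof. rewrite /bdot -sumZ; apply: eq_bigr => j _; ring. Qed.

Lemma bdot_sub_l k (u v w : bvec k) : bdot u w - bdot v w = bdot (bsub u v) w.
Proof.
have -> : bsub u v = (fun j => 1 * u j + (-1) * v j).
  by apply: functional_extensionality => j; rewrite /bsub; ring.
rewrite bdot_lin; ring.
Qed.

Lemma dot_Ublk (G h : vec n) i : dot G (Ublk i h) = bdot (G i) (h i).
Proof.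
rewrite /dot (@sum_single _ i).
  by rewrite /Ublk eqxx.
by move=> l hl; rewrite /Ublk (negbTE hl) bdot0r.
Qed.

Lemma norm2_Ublk (h : vec n) i : norm2 (Ublk i h) = bnorm2 (h i).
Proof.
rewrite /norm2 /dot (@sum_single _ i).
  by rewrite /Ublk eqxx.
by move=> l hl; rewrite /Ublk (negbTE hl) bdot0r.
Qed.

Lemma wnorm2_Ublk (w : 'I_m -> R) (h : vec n) i : wnorm2 w (Ublk i h) = w i * bnorm2 (h i).
Proof.
rewrite /wnorm2 (@sum_single _ i).
  by rewrite /Ublk eqxx.
by move=> l hl; rewrite /Ublk (negbTE hl) /bnorm2 bdot0r; ring.
Qed.

Lemma Ublk_id (z : vec n) i : (forall l, l != i -> forall j, z l j = 0) -> Ublk i z = z.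
Proof.
move=> H; apply: vec_ext => l j; rewrite /Ublk.
by case: eqP => [// | /eqP hl]; rewrite H.
Qed.

Lemma vadd_Ublk (y z : vec n) i : (forall l, l != i -> forall j, y l j = z l j) ->
  vadd z (Ublk i (vsub y z)) = y.
Proof.
move=> H; apply: vec_ext => l j; rewrite /vadd /Ublk.
case: eqP => [_ | /eqP hl]; rewrite /vsub; first ring.
rewrite H //; ring.
Qed.

Lemma norm2_scale c (x : vec n) : norm2 (vscale c x) = c * c * norm2 x.
Proof.
rewrite /norm2 /dot -sumZ; apply: eq_bigr => i _.
rewrite /bdot -sumZ; apply: eq_bigr => j _; rewrite /vscale; ring.
Qed.

Lemma sqrt_scale c a : 0 <= a -> sqrt (c * c * a) = Rabs c * sqrt a.
Proof.
move=> ha; rewrite sqrt_mult_alt; last nra.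
by rewrite -sqrt_Rsqr_abs.
Qed.

Lemma norm_scale c (x : vec n) : norm (vscale c x) = Rabs c * norm x.
Proof. rewrite /norm norm2_scale sqrt_scale //; exact: norm2_ge0. Qed.

Lemma bnorm_scale k c (u : bvec k) : bnorm (fun j => c * u j) = Rabs c * bnorm u.
Proof.
rewrite /bnorm -sqrt_scale; last exact: bnorm2_ge0.
congr sqrt; rewrite /bnorm2 /bdot -sumZ; apply: eq_bigr => j _; ring.
Qed.

Lemma sq_le a b c : 0 <= a -> 0 <= b -> sqrt a <= c * sqrt b -> a <= c * c * b.
Proof.
move=> ha hb h.
have sa := sqrt_sqrt a ha. have sb := sqrt_sqrt b hb.
have p := sqrt_pos a. have q := sqrt_pos b.
rewrite -sa -sb. nra.
Qed.

Lemma norm2_add (x y : vec n) : norm2 (vadd x y) = norm2 x + 2 * dot x y + norm2 y.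
Proof.
have -> : vadd x y = (fun i j => x i j - (-1) * y i j).
  by apply: vec_ext => i j; rewrite /vadd; ring.
rewrite norm2_quad; ring.
Qed.

End Blocks.

Unset Implicit Arguments. Set Strict Implicit.


Section Analysis.
Variables (m : nat) (n : 'I_m -> nat) (f : vec n -> R) (gradf : vec n -> vec n).
Hypothesis hg : has_gradient f gradf.

Lemma dot_scale_r (x y : vec n) c : dot x (vscale c y) = c * dot x y.
Proof.
rewrite /dot -sumZ; apply: eq_bigr => i _.
rewrite /bdot -sumZ; apply: eq_bigr => j _; rewrite /vscale; ring.
Qed.

Lemma convex_first (hc : convex_fun f) (x y : vec n) :
  f y + dot (gradf y) (vsub x y) <= f x.
Proof.
set d := vsub x y; set G := gradf y.
have hnd : 0 <= norm d by apply: sqrt_pos.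
set nd := norm d in hnd.
destruct (Rle_dec (f y + dot G d) (f x)) as [|hlt]; first by [].
exfalso.
set gap := f y + dot G d - f x.
have gp : 0 < gap by rewrite /gap; lra.
have ep : 0 < gap / (2 * (nd + 1)) by apply: Rdiv_lt_0_compat; lra.
have [del [dp Hd]] := hg y _ ep.
set t := Rmin 1 (del / (2 * (nd + 1))).
have t1 : t <= 1 by apply: Rmin_l.
have t2 : t <= del / (2 * (nd + 1)) by apply: Rmin_r.
have tp : 0 < t.
  apply: Rmin_pos; first lra. apply: Rdiv_lt_0_compat; lra.
set p := vadd (vscale t x) (vscale (1 - t) y).
have ep_ : vsub p y = vscale t d.
  apply: vec_ext => i j; rewrite /vsub /p /vadd /vscale /d /vsub; ring.
have hn : norm (vsub p y) = t * nd by rewrite ep_ norm_scale Rabs_pos_eq //; lra.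
have hlt2 : norm (vsub p y) < del.
  rewrite hn.
  have : t * nd <= del / (2 * (nd + 1)) * nd by apply: Rmult_le_compat_r.
  have : del / (2 * (nd + 1)) * nd <= del / 2.
    apply: (Rmult_le_reg_r (2 * (nd + 1))); first lra.
    have -> : del / (2 * (nd + 1)) * nd * (2 * (nd + 1)) = del * nd by field; lra.
    have -> : del / 2 * (2 * (nd + 1)) = del * nd + del by field.
    lra.
  lra.
have H1 := Hd p hlt2.
rewrite hn ep_ dot_scale_r in H1.
have H2 := hc x y t (conj (Rlt_le _ _ tp) t1).
rewrite -/p in H2.
have H3 : t * (dot G d - gap / (2 * (nd + 1)) * nd - (f x - f y)) <= 0.
  have := Rabs_le_inv H1. rewrite /G. nra.
have H4 : dot G d - gap / (2 * (nd + 1)) * nd - (f x - f y) <= 0.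
  by apply: (Rmult_le_reg_l t); [lra | rewrite Rmult_0_r].
have H5 : gap / (2 * (nd + 1)) * nd <= gap / 2.
  apply: (Rmult_le_reg_r (2 * (nd + 1))); first lra.
  have -> : gap / (2 * (nd + 1)) * nd * (2 * (nd + 1)) = gap * nd by field; lra.
  have -> : gap / 2 * (2 * (nd + 1)) = gap * nd + gap by field.
  lra.
rewrite /gap in H4 H5 gp. lra.
Qed.

Lemma line_deriv (z : vec n) (i : 'I_m) (h : vec n) (t : R) :
  derivable_pt_lim (fun s : R => f (vadd z (Ublk i (vscale s h)))) t
    (bdot (gradf (vadd z (Ublk i (vscale t h))) i) (h i)).
Proof.
move=> eps ep.
set w := fun s => vadd z (Ublk i (vscale s h)).
set K := bnorm (h i).
have hK : 0 <= K by apply: sqrt_pos.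
have e' : 0 < eps / (2 * (K + 1)) by apply: Rdiv_lt_0_compat; lra.
have [del [dp Hd]] := hg (w t) _ e'.
have dpos : 0 < del / (K + 1) by apply: Rdiv_lt_0_compat; lra.
exists (mkposreal _ dpos) => hh hh0 hhlt; simpl in hhlt.
have ev : vsub (w (t + hh)) (w t) = Ublk i (vscale hh h).
  apply: vec_ext => l j; rewrite /vsub /w /vadd /Ublk.
  case: eqP => _; rewrite /vscale; ring.
have hn : norm (Ublk i (vscale hh h)) = Rabs hh * K.
  rewrite /norm norm2_Ublk; exact: (bnorm_scale hh (h i)).
have ah : 0 < Rabs hh by apply: Rabs_pos_lt.
have lt : norm (vsub (w (t + hh)) (w t)) < del.
  rewrite ev hn.
  have : Rabs hh * (K + 1) < del.
    have := Rmult_lt_compat_r (K + 1) _ _ ltac:(lra) hhlt.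
    have -> : del / (K + 1) * (K + 1) = del by field; lra.
    done.
  nra.
have H := Hd _ lt.
rewrite ev hn dot_Ublk in H.
have E : bdot (gradf (w t) i) ((vscale hh h : vec n) i) = hh * bdot (gradf (w t) i) (h i)
  by exact: bdot_scale_r.
rewrite E in H.
set l := bdot (gradf (w t) i) (h i) in H *.
set A := f (w (t + hh)) - f (w t) - hh * l in H.
have -> : (f (w (t + hh)) - f (w t)) / hh - l = A / hh by rewrite /A; field.
apply: (Rmult_lt_reg_r (Rabs hh)); first done.
rewrite -Rabs_mult.
have -> : A / hh * hh = A by field.
have : eps / (2 * (K + 1)) * (Rabs hh * K) <= eps * Rabs hh / 2.
  apply: (Rmult_le_reg_r (2 * (K + 1))); first lra.
  have -> : eps / (2 * (K + 1)) * (Rabs hh * K) * (2 * (K + 1)) = eps * Rabs hh * K by field; lra.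
  have -> : eps * Rabs hh / 2 * (2 * (K + 1)) = eps * Rabs hh * K + eps * Rabs hh by field.
  nra.
nra.
Qed.

Variable (L : 'I_m -> R).
Hypothesis hL : forall (i : 'I_m) (y z : vec n),
  bnorm (bsub (gradf (vadd z (Ublk i y)) i) (gradf z i)) <= L i * bnorm (y i).

Lemma descent (z : vec n) (i : 'I_m) (h : vec n) :
  f (vadd z (Ublk i h)) <= f z + bdot (gradf z i) (h i) + L i / 2 * bnorm2 (h i).
Proof.
set w := fun s => vadd z (Ublk i (vscale s h)).
set l0 := bdot (gradf z i) (h i).
set b := bnorm2 (h i).
have hb : 0 <= b by apply: bnorm2_ge0.
have w0 : w 0 = z.
  apply: vec_ext => l j; rewrite /w /vadd /Ublk; case: eqP => _; rewrite /vscale; ring.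
have w1 : w 1 = vadd z (Ublk i h).
  apply: vec_ext => l j; rewrite /w /vadd /Ublk; case: eqP => _; rewrite /vscale; ring.
set phi := fun s => f (w s).
set g := (mult_real_fct l0 id + mult_real_fct (L i / 2 * b) Rsqr)%F.
have D : forall c, derivable_pt_lim (phi - g)%F c
    (bdot (gradf (w c) i) (h i) - (l0 * 1 + (L i / 2 * b) * (2 * c))).
  move=> c; apply: derivable_pt_lim_minus.
    exact: line_deriv.
  apply: derivable_pt_lim_plus; apply: derivable_pt_lim_scal.
    exact: derivable_pt_lim_id.
  exact: derivable_pt_lim_Rsqr.
have [c [Hc [c0 c1]]] := MVT_cor2 _ _ 0 1 Rlt_0_1 (fun c _ => D c).
have Hneg : bdot (gradf (w c) i) (h i) - l0 <= L i * c * b.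
  rewrite /l0 bdot_sub_l.
  apply: Rle_trans; first exact: bdot_cs.
  have H1 := hL i (vscale c h) z.
  have -> : L i * c * b = (L i * bnorm ((vscale c h : vec n) i)) * bnorm (h i).
    have -> : bnorm ((vscale c h : vec n) i) = Rabs c * bnorm (h i) by exact: bnorm_scale.
    rewrite Rabs_pos_eq; last lra.
    have := sqrt_sqrt b hb. rewrite /bnorm -/b. nra.
  apply: Rmult_le_compat_r; first exact: sqrt_pos.
  exact: H1.
move: Hc. rewrite /g /phi /minus_fct /plus_fct /mult_real_fct /id /Rsqr w0 w1.
move=> Hc. nra.
Qed.

End Analysis.

Lemma sum_recr (P : pred nat) (F : nat -> R) p :
  \big[Rplus/R0]_(0 <= s < p.+1 | P s) F s =
  \big[Rplus/R0]_(0 <= s < p | P s) F s + (if P p then F p else 0).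
Proof. by rewrite !(big_mkcond P) big_nat_recr. Qed.

Lemma iter_INR q : iter q (Rplus 1) 0 = INR q.
Proof. elim: q => [//|q IH] /=; rewrite IH; case: q {IH} => [|q] /=; ring. Qed.

Lemma sqrt_amgm N S b : 0 <= N -> 0 <= S -> 0 <= b ->
  sqrt (N * S) * sqrt b <= / 2 * (S + N * b).
Proof.
move=> hN hS hb.
rewrite sqrt_mult_alt //.
have h1 := sqrt_sqrt N hN; have h2 := sqrt_sqrt S hS; have h3 := sqrt_sqrt b hb.
have := sqrt_pos N; have := sqrt_pos S; have := sqrt_pos b.
have h4 := Rle_0_sqr (sqrt S - sqrt N * sqrt b); rewrite /Rsqr in h4.
have e : (sqrt S - sqrt N * sqrt b) * (sqrt S - sqrt N * sqrt b) =
  sqrt S * sqrt S - 2 * (sqrt N * sqrt S * sqrt b) + (sqrt N * sqrt N) * (sqrt b * sqrt b)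
  by ring.
rewrite h1 h2 h3 in e. lra.
Qed.

Lemma amgm a b c : 0 < c -> a * b <= a * a / (2 * c) + c / 2 * (b * b).
Proof.
move=> hc.
have h := Rle_0_sqr (a - c * b); rewrite /Rsqr in h.
have -> : a * a / (2 * c) + c / 2 * (b * b) = a * b + (a - c * b) * (a - c * b) / (2 * c)
  by field; lra.
have : 0 <= (a - c * b) * (a - c * b) / (2 * c).
  apply: Rmult_le_pos => //. apply: Rlt_le; apply: Rinv_0_lt_compat; lra.
lra.
Qed.

Section Vec.
Variables (m : nat) (n : 'I_m -> nat).
Lemma dot_add_r (G a b : vec n) : dot G (vadd a b) = dot G a + dot G b.
Proof.
rewrite dot_sym.
have -> : vadd a b = (fun i j => 1 * a i j + 1 * b i j).
  by apply: vec_ext => i j; rewrite /vadd; ring.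
rewrite dot_lin (dot_sym a) (dot_sym b); ring.
Qed.
Lemma dot_sub_l (a b c : vec n) : dot a c - dot b c = dot (vsub a b) c.
Proof.
have -> : vsub a b = (fun i j => 1 * a i j + (-1) * b i j).
  by apply: vec_ext => i j; rewrite /vsub; ring.
rewrite dot_lin; ring.
Qed.
Lemma dot_self_sub (G a : vec n) : dot G (vsub a a) = 0.
Proof.
have -> : vsub a a = vscale 0 a by apply: vec_ext => i j; rewrite /vsub /vscale; ring.
rewrite dot_scale_r; ring.
Qed.
Lemma norm2_self_sub (a : vec n) : norm2 (vsub a a) = 0.
Proof. by rewrite /norm2 dot_self_sub. Qed.

Lemma norm2_add_bound (A b : vec n) N M T :
  0 <= N -> 0 <= M -> norm2 A <= N * M -> norm2 b <= T ->
  norm2 (vadd A b) <= (N + 1) * (M + T).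
Proof.
move=> hN hM hA hb.
rewrite norm2_add.
have hT : 0 <= T by have := norm2_ge0 b; lra.
have c1 := dot_cs A b.
have c2 : norm A <= sqrt (N * M) by apply: sqrt_le_1_alt.
have c3 : norm b <= sqrt T by apply: sqrt_le_1_alt.
have c4 : norm A * norm b <= sqrt (N * M) * sqrt T.
  apply: Rmult_le_compat => //; apply: sqrt_pos.
have c5 := sqrt_amgm N M T hN hM hT.
nra.
Qed.
End Vec.

Lemma sum_mono_range (P : pred nat) (F : nat -> R) p q :
  (forall s, 0 <= F s) -> (p <= q)%N ->
  \big[Rplus/R0]_(0 <= s < p | P s) F s <= \big[Rplus/R0]_(0 <= s < q | P s) F s.
Proof.
move=> hF hpq.
rewrite [in X in _ <= X](big_cat_nat _ (n:=p)) //=.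
have := @sum_ge0 _ (index_iota p q) P F (fun s _ => hF s). lra.
Qed.

Lemma sum_window (P : pred nat) (F : nat -> R) k tau :
  (forall s, 0 <= F s) -> (forall s, P s -> (k <= s + tau)%N) ->
  \big[Rplus/R0]_(0 <= s < k | P s) F s <= \big[Rplus/R0]_((k - tau)%N <= s < k) F s.
Proof.
move=> hF hP.
rewrite (big_cat_nat _ (n:=(k - tau)%N)) //=; last by apply: leq_subr.
rewrite big1_seq; last first.
  move=> s /andP [Ps]; rewrite mem_index_iota => /andP [_ hs].
  exfalso; have := hP s Ps; move: hs; lia.
rewrite Rplus_0_l big_mkcond.
apply: sum_le => s _; have := hF s; case: (P s) => ?; lra.
Qed.

Section Path.
Variables (m : nat) (n : 'I_m -> nat) (f : vec n -> R) (gradf : vec n -> vec n).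
Variables (L : 'I_m -> R) (Lr : R) (tau : nat) (x : nat -> vec n) (ik : nat -> 'I_m)
  (J : nat -> nat -> bool) (k : nat).
Hypothesis hg : has_gradient f gradf.
Hypothesis hL : forall (i : 'I_m) (y z : vec n),
  bnorm (bsub (gradf (vadd z (Ublk i y)) i) (gradf z i)) <= L i * bnorm (y i).
Hypothesis hLr : forall (i : 'I_m) (y z : vec n),
  norm (vsub (gradf (vadd z (Ublk i y))) (gradf z)) <= Lr * bnorm (y i).
Hypothesis hupd : forall p, (p < k)%N -> forall l, l != ik p -> forall jj, x p.+1 l jj = x p l jj.
Hypothesis hLp : forall i, 0 <= L i.
Hypothesis hJ : forall e, J k e -> (e < k)%N /\ (k <= e + tau)%N.

Definition yv p : vec n :=
  fun i j => x k i j + \big[Rplus/R0]_(p <= e < k | J k e) (x e i j - x e.+1 i j).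
Definition dl s : vec n := vsub (x s.+1) (x s).
Definition Nc p := \big[Rplus/R0]_(0 <= s < p | J k s) 1.
Definition Sc p := \big[Rplus/R0]_(0 <= s < p | J k s) norm2 (dl s).
Definition SLc p := \big[Rplus/R0]_(0 <= s < p | J k s) wnorm2 L (dl s).

Lemma y_step p : (p < k)%N -> yv p.+1 = if J k p then vadd (yv p) (dl p) else yv p.
Proof.
move=> hp; case hJp: (J k p); apply: vec_ext => i j;
  rewrite /yv /vadd /dl /vsub (big_ltn_cond (m:=p) (n:=k) hp) hJp /=; ring.
Qed.

Lemma dl_blk p : (p < k)%N -> Ublk (ik p) (dl p) = dl p.
Proof.
move=> hp; apply: Ublk_id => l hl j; rewrite /dl /vsub hupd //; ring.
Qed.

Lemma desc_step p : (p < k)%N ->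
  f (vadd (yv p) (dl p)) <= f (yv p) + dot (gradf (yv p)) (dl p) + / 2 * wnorm2 L (dl p).
Proof.
move=> hp.
have H := descent m n f gradf hg L hL (yv p) (ik p) (dl p).
rewrite -(dl_blk p hp) dot_Ublk wnorm2_Ublk.
have -> : / 2 * (L (ik p) * bnorm2 (dl p (ik p))) = L (ik p) / 2 * bnorm2 (dl p (ik p)) by field.
exact: H.
Qed.

Lemma lr_step p : (p < k)%N ->
  norm2 (vsub (gradf (vadd (yv p) (dl p))) (gradf (yv p))) <= Lr * Lr * norm2 (dl p).
Proof.
move=> hp.
have H := hLr (ik p) (dl p) (yv p).
rewrite (dl_blk p hp) in H.
rewrite -{2}(dl_blk p hp) norm2_Ublk.
apply: sq_le => //; [exact: norm2_ge0 | exact: bnorm2_ge0].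
Qed.

Lemma Nc_ge0 p : 0 <= Nc p.
Proof. apply: sum_ge0 => s _; lra. Qed.
Lemma Sc_ge0 p : 0 <= Sc p.
Proof. apply: sum_ge0 => s _; exact: norm2_ge0. Qed.
Lemma Nc_tau : Nc k <= INR tau.
Proof.
apply: Rle_trans.
  apply: (sum_window (fun s => J k s) (fun _ => 1) k tau) => [s|s hs]; first lra.
  by case: (hJ s hs).
rewrite big_const_nat iter_INR. apply: le_INR.
apply/leP. lia.
Qed.
Lemma Sc_mono p : (p <= k)%N -> Sc p <= Sc k.
Proof. move=> hp; apply: sum_mono_range => // s; exact: norm2_ge0. Qed.
Lemma Nc_mono p : (p <= k)%N -> Nc p <= Nc k.
Proof. move=> hp; apply: sum_mono_range => // s; lra. Qed.

Lemma path_ind p : (p <= k)%N ->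
  norm2 (vsub (gradf (yv p)) (gradf (yv 0))) <= Nc p * (Lr * Lr * Sc p) /\
  f (yv p) - f (yv 0) - dot (gradf (yv 0)) (vsub (yv p) (yv 0))
    <= Rabs Lr / 2 * (Nc p * Sc k + INR tau * Sc p) + / 2 * SLc p.
Proof.
elim: p => [|p IH] hp.
  have e1 : Nc 0 = 0 by rewrite /Nc big_geq.
  have e2 : Sc 0 = 0 by rewrite /Sc big_geq.
  have e3 : SLc 0 = 0 by rewrite /SLc big_geq.
  rewrite e1 e2 e3 norm2_self_sub dot_self_sub. split; nra.
have hpk : (p < k)%N := hp.
have [IH1 IH2] := IH (ltnW hp).
have eN : Nc p.+1 = Nc p + (if J k p then 1 else 0) := sum_recr _ _ p.
have eS : Sc p.+1 = Sc p + (if J k p then norm2 (dl p) else 0) := sum_recr _ _ p.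
have eSL : SLc p.+1 = SLc p + (if J k p then wnorm2 L (dl p) else 0) := sum_recr _ _ p.
rewrite eN eS eSL (y_step p hpk).
have hN := Nc_ge0 p. have hS := Sc_ge0 p.
case hJp: (J k p); last first.
  split; lra.
set G := gradf (yv 0).
set b := norm2 (dl p).
have hb : 0 <= b by apply: norm2_ge0.
have hLL : 0 <= Lr * Lr by nra.
split.
  have -> : vsub (gradf (vadd (yv p) (dl p))) G =
    vadd (vsub (gradf (yv p)) G) (vsub (gradf (vadd (yv p) (dl p))) (gradf (yv p))).
    apply: vec_ext => i j; rewrite /vadd /vsub; ring.
  have := norm2_add_bound m n (vsub (gradf (yv p)) G)
    (vsub (gradf (vadd (yv p) (dl p))) (gradf (yv p))) (Nc p) (Lr * Lr * Sc p)
    (Lr * Lr * b) hN ltac:(nra) IH1 (lr_step p hpk).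
  have -> : (Nc p + 1) * (Lr * Lr * Sc p + Lr * Lr * b) = (Nc p + 1) * (Lr * Lr * (Sc p + b)) by ring.
  done.
have -> : vsub (vadd (yv p) (dl p)) (yv 0) = vadd (vsub (yv p) (yv 0)) (dl p).
  apply: vec_ext => i j; rewrite /vadd /vsub; ring.
rewrite dot_add_r.
have A1 := desc_step p hpk.
have A2 : dot (gradf (yv p)) (dl p) - dot G (dl p) <= Rabs Lr * (/ 2 * (Sc p + Nc p * b)).
  rewrite dot_sub_l.
  apply: Rle_trans; first exact: dot_cs.
  have c2 : norm (vsub (gradf (yv p)) G) <= sqrt (Nc p * (Lr * Lr * Sc p))
    by apply: sqrt_le_1_alt.
  have c3 : norm (vsub (gradf (yv p)) G) * norm (dl p) <= sqrt (Nc p * (Lr * Lr * Sc p)) * sqrt b.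
    apply: Rmult_le_compat_r => //; apply: sqrt_pos.
  apply: Rle_trans; first exact: c3.
  have -> : Nc p * (Lr * Lr * Sc p) = Lr * Lr * (Nc p * Sc p) by ring.
  rewrite sqrt_scale; last nra.
  rewrite Rmult_assoc.
  apply: Rmult_le_compat_l; first exact: Rabs_pos.
  exact: sqrt_amgm.
have hNt : Nc p <= INR tau := Rle_trans _ _ _ (Nc_mono p (ltnW hp)) Nc_tau.
have hSk : Sc p <= Sc k := Sc_mono p (ltnW hp).
have A3 : Rabs Lr * (/ 2 * (Sc p + Nc p * b)) <= Rabs Lr * (/ 2 * (Sc k + INR tau * b)).
  apply: Rmult_le_compat_l; first exact: Rabs_pos.
  have : Nc p * b <= INR tau * b by apply: Rmult_le_compat_r.
  lra.
rewrite -/G in IH2 A1.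
lra.
Qed.

Lemma path_final :
  norm2 (vsub (gradf (x k)) (gradf (yv 0)))
    <= INR tau * (Lr * Lr * \big[Rplus/R0]_((k - tau)%N <= d < k) norm2 (vsub (x d.+1) (x d))) /\
  f (x k) - f (yv 0) - dot (gradf (yv 0)) (vsub (x k) (yv 0))
    <= Rabs Lr * INR tau * \big[Rplus/R0]_((k - tau)%N <= d < k) norm2 (vsub (x d.+1) (x d))
       + / 2 * \big[Rplus/R0]_((k - tau)%N <= d < k) wnorm2 L (vsub (x d.+1) (x d)).
Proof.
have ek : yv k = x k.
  apply: vec_ext => i j; rewrite /yv big_geq //; ring.
have [H1 H2] := path_ind k (leqnn k).
rewrite ek in H1 H2.
have hSt : Sc k <= \big[Rplus/R0]_((k - tau)%N <= d < k) norm2 (vsub (x d.+1) (x d)).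
  apply: (sum_window (fun s => J k s) (fun s => norm2 (dl s))) => [s|s hs].
    exact: norm2_ge0.
  by case: (hJ s hs).
have hSLt : SLc k <= \big[Rplus/R0]_((k - tau)%N <= d < k) wnorm2 L (vsub (x d.+1) (x d)).
  apply: (sum_window (fun s => J k s) (fun s => wnorm2 L (dl s))) => [s|s hs].
    apply: sum_ge0 => i _; apply: Rmult_le_pos; [exact: hLp | exact: bnorm2_ge0].
  by case: (hJ s hs).
set St := \big[Rplus/R0]_((k - tau)%N <= d < k) norm2 (vsub (x d.+1) (x d)) in hSt *.
have hN := Nc_ge0 k. have hS := Sc_ge0 k. have hNt := Nc_tau.
have hLL : 0 <= Lr * Lr by nra.
have hA := Rabs_pos Lr.
have P1 : Nc k * Sc k <= INR tau * St by apply: Rmult_le_compat.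
have P2 : INR tau * Sc k <= INR tau * St by apply: Rmult_le_compat_l; [apply: pos_INR | ].
split.
  apply: Rle_trans; first exact: H1.
  have -> : Nc k * (Lr * Lr * Sc k) = Lr * Lr * (Nc k * Sc k) by ring.
  have -> : INR tau * (Lr * Lr * St) = Lr * Lr * (INR tau * St) by ring.
  by apply: Rmult_le_compat_l.
apply: Rle_trans; first exact: H2.
have : Rabs Lr / 2 * (Nc k * Sc k + INR tau * Sc k) <= Rabs Lr / 2 * (INR tau * St + INR tau * St).
  apply: Rmult_le_compat_l; lra.
lra.
Qed.
End Path.

Lemma Lmax_ge (m : nat) (L : 'I_m -> R) j : L j <= Lmax L.
Proof.
rewrite /Lmax.
have : forall r : seq 'I_m, j \in r -> L j <= \big[Rmax/R0]_(i <- r) L i.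
  elim=> [//|a r IH]; rewrite in_cons big_cons => /orP [/eqP -> | hj].
    exact: Rmax_l.
  apply: Rle_trans; first exact: IH.
  exact: Rmax_r.
by apply; rewrite mem_index_enum.
Qed.

Lemma sum_const_ord (m : nat) (c : R) : \big[Rplus/R0]_(j < m) c = INR m * c.
Proof.
rewrite big_const_ord. elim: m => [|m IH]; first by rewrite /=; ring.
rewrite S_INR /= IH; ring.
Qed.

Lemma norm2_zero_of_neg (m : nat) (n : 'I_m -> nat) (gradf : vec n -> vec n) (Lr : R) :
  (forall (i : 'I_m) (y z : vec n),
     norm (vsub (gradf (vadd z (Ublk i y))) (gradf z)) <= Lr * bnorm (y i)) ->
  Lr < 0 -> forall y : vec n, norm2 y = 0.
Proof.
move=> hLr hneg y.
rewrite /norm2 /dot big1 // => i _.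
have h1 := hLr i y y.
have h2 : 0 <= norm (vsub (gradf (vadd y (Ublk i y))) (gradf y)) by apply: sqrt_pos.
have h3 : 0 <= bnorm (y i) by apply: sqrt_pos.
have h4 : bnorm (y i) = 0 by nra.
apply: sqrt_eq_0 => //. exact: bnorm2_ge0.
Qed.

Theorem mainTheorem9
  (m : nat) (n : 'I_m -> nat) (q : nat)
  (f : vec n -> R) (gradf : vec n -> vec n)
  (g : forall i : 'I_m, bvec (n i) -> option R)
  (A : forall i : 'I_m, 'I_q -> 'I_(n i) -> R) (b : 'I_q -> R)
  (L : 'I_m -> R) (Lr : R) (beta rho : R)
  (P : forall i : 'I_m, 'I_(n i) -> 'I_(n i) -> R)
  (tau : nat)
  (x xhat : nat -> vec n) (r lam : nat -> 'I_q -> R)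
  (ik : nat -> 'I_m) (J : nat -> nat -> bool)
  (k : nat) (xnext : 'I_m -> vec n) (alpha : R) (xx : vec n) :
  (0 < m)%N ->
  (* f convex, continuously differentiable *)
  convex_fun f -> has_gradient f gradf -> continuous_map gradf ->
  (* g_i proper, convex, lower semicontinuous *)
  (forall i, proper_fun (g i) /\ convex_ext (g i) /\ lsc_ext (g i)) ->
  (* gradient Lipschitz continuity *)
  (forall i, 0 < L i) ->
  (forall (i : 'I_m) (y z : vec n),
     bnorm (bsub (gradf (vadd z (Ublk i y)) i) (gradf z i)) <= L i * bnorm (y i)) ->
  (forall (i : 'I_m) (y z : vec n),
     norm (vsub (gradf (vadd z (Ublk i y))) (gradf z)) <= Lr * bnorm (y i)) ->
  (* Algorithm 2: parameters and initialization *)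
  0 < beta -> 0 < rho ->
  (forall i, sym_mx (P i) /\ psd_mx (P i)) ->
  (forall s, lam 0%N s = 0) ->
  (forall s, r 0%N s = Afull A (x 0%N) s - b s) ->
  (* Algorithm 2: the iterations d = 0, ..., k-1 already performed *)
  (forall d : nat, (d < k)%N ->
     x_update gradf g A P beta (ik d) (x d) (xhat d) (r d) (lam d) (x d.+1) /\
     (forall s, r d.+1 s = r d s + Amul (A (ik d)) (bsub (x d.+1 (ik d)) (x d (ik d))) s) /\
     (forall s, lam d.+1 s = lam d s - rho * r d.+1 s)) ->
  (* bounded delay, for the iterations d = 0, ..., k *)
  (forall d e : nat, (d <= k)%N -> J d e -> (e < d)%N /\ (d <= e + tau)%N) ->
  (forall d : nat, (d <= k)%N -> forall i j,
     xhat d i j = x d i j + \big[Rplus/R0]_(0 <= e < d | J d e) (x e i j - x e.+1 i j)) ->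
  (* iteration k: xnext j is x^{k+1} when i_k = j *)
  (forall j : 'I_m, x_update gradf g A P beta j (x k) (xhat k) (r k) (lam k) (xnext j)) ->
  0 < alpha ->
  let Lc := Lmax L in
  let kappa := Lr / Lc in
  Eik (fun j => bdot (gradf (xhat k) j) (bsub (xnext j j) (xx j)))
  >= Eik (fun j => f (xnext j) - f xx)
     - (1 - / INR m) * (f (x k) - f xx)
     - / 2 * Eik (fun j => wnorm2 (fun i => L i + alpha * Lc) (vsub (xnext j) (x k)))
     - (kappa * Lr * INR tau / alpha + 2 * Lr * INR tau) / (2 * INR m)
         * \big[Rplus/R0]_((k - tau)%N <= d < k) norm2 (vsub (x d.+1) (x d))
     - / (2 * INR m)
         * \big[Rplus/R0]_((k - tau)%N <= d < k) wnorm2 L (vsub (x d.+1) (x d)).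
Proof.
move=> hm hconv hgrad hcont hgi hLpos hL hLr hbeta hrho hP hlam0 hr0 hiter hdelay hxhat hnext
  halpha Lc kappa.
have hLp : forall i, 0 <= L i by move=> i; have := hLpos i; lra.
have hupd : forall p, (p < k)%N -> forall l, l != ik p -> forall jj, x p.+1 l jj = x p l jj.
  by move=> p hp l hl jj; case: (hiter p hp) => [[H _] _]; apply: H.
have hJ : forall e, J k e -> (e < k)%N /\ (k <= e + tau)%N.
  by move=> e; apply: hdelay.
have yv0 : yv m n x J k 0 = xhat k.
  by apply: vec_ext => i j; rewrite (hxhat k (leqnn k)).
have [PF1 PF2] := path_final m n f gradf L Lr tau x ik J k hgrad hL hLr hupd hLp hJ.
rewrite yv0 in PF1 PF2.
set X := x k in PF1 PF2 *.
set Xh := xhat k in yv0 PF1 PF2 *.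
set G := gradf Xh in PF1 PF2 *.
set St := \big[Rplus/R0]_((k - tau)%N <= d < k) norm2 (vsub (x d.+1) (x d)) in PF1 PF2 *.
set SLt := \big[Rplus/R0]_((k - tau)%N <= d < k) wnorm2 L (vsub (x d.+1) (x d)) in PF1 PF2 *.
have hSt : 0 <= St by apply: sum_ge0 => d _; exact: norm2_ge0.
have hSLt : 0 <= SLt.
  by apply: sum_ge0 => d _; apply: sum_ge0 => i _; apply: Rmult_le_pos; [exact: hLp | exact: bnorm2_ge0].
have [j0 _] : exists j0 : 'I_m, True by exists (Ordinal hm).
have hLc : 0 < Lc by have := Lmax_ge _ L j0; have := hLpos j0; rewrite /Lc; lra.
have hLcj : forall j, L j <= Lc by move=> j; apply: (Lmax_ge _ L j).
set c := alpha * Lc.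
have hc : 0 < c by rewrite /c; nra.
have QJ : forall j : 'I_m,
  f (xnext j) + (-1) * f X + (- / 2) * wnorm2 (fun i => L i + alpha * Lc) (vsub (xnext j) X)
  + (- / (2 * c)) * bnorm2 (bsub (gradf X j) (G j)) + bdot (G j) (bsub (X j) (xx j))
  <= bdot (G j) (bsub (xnext j j) (xx j)).
  move=> j.
  have [Hoff _] := hnext j.
  set D := bsub (xnext j j) (X j).
  have e1 : bdot (G j) (bsub (xnext j j) (xx j)) = bdot (G j) D + bdot (G j) (bsub (X j) (xx j)).
    rewrite /bdot -sumD; apply: eq_bigr => jj _; rewrite /D /bsub; ring.
  have Hz : forall l, l != j -> forall jj, (vsub (xnext j) X : vec n) l jj = 0.
    by move=> l hl jj; rewrite /vsub (Hoff l hl jj) /X; ring.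
  have e2 : wnorm2 (fun i => L i + alpha * Lc) (vsub (xnext j) X) = (L j + alpha * Lc) * bnorm2 D.
    by rewrite -[in LHS](Ublk_id Hz) wnorm2_Ublk.
  have H := descent m n f gradf hgrad L hL X j (vsub (xnext j) X).
  rewrite vadd_Ublk in H; last by move=> l hl jj; rewrite Hoff.
  change (f (xnext j) <= f X + bdot (gradf X j) D + L j / 2 * bnorm2 D) in H.
  have e3 := bdot_sub_l (gradf X j) (G j) D.
  have e4 : bdot (bsub (gradf X j) (G j)) D
      <= bnorm2 (bsub (gradf X j) (G j)) / (2 * c) + c / 2 * bnorm2 D.
    apply: Rle_trans; first exact: bdot_cs.
    have := amgm (bnorm (bsub (gradf X j) (G j))) (bnorm D) c hc.
    rewrite /bnorm !sqrt_sqrt //; exact: bnorm2_ge0.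
  have hD := bnorm2_ge0 D.
  rewrite e1 e2.
  have -> : (- / (2 * c)) * bnorm2 (bsub (gradf X j) (G j)) = - (bnorm2 (bsub (gradf X j) (G j)) / (2 * c))
    by rewrite /Rdiv; ring.
  rewrite /c in e4 *. lra.
have SUM : \big[Rplus/R0]_(j < m) (f (xnext j) + (-1) * f X
     + (- / 2) * wnorm2 (fun i => L i + alpha * Lc) (vsub (xnext j) X)
     + (- / (2 * c)) * bnorm2 (bsub (gradf X j) (G j)) + bdot (G j) (bsub (X j) (xx j)))
  <= \big[Rplus/R0]_(j < m) bdot (G j) (bsub (xnext j j) (xx j)).
  by apply: sum_le => j _; exact: QJ.
rewrite !sumD !sumZ sum_const_ord in SUM.
change (\big[Rplus/R0]_(j < m) bnorm2 (bsub (gradf X j) (G j))) with (norm2 (vsub (gradf X) G)) in SUM.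
change (\big[Rplus/R0]_(j < m) bdot (G j) (bsub (X j) (xx j))) with (dot G (vsub X xx)) in SUM.
have CV := convex_first m n f gradf hgrad hconv xx Xh.
rewrite -/G in CV.
have eG : dot G (vsub X xx) = dot G (vsub X Xh) - dot G (vsub xx Xh).
  have -> : vsub X xx = (fun i j => 1 * (vsub X Xh : vec n) i j + (-1) * (vsub xx Xh : vec n) i j).
    by apply: vec_ext => i j; rewrite /vsub; ring.
  rewrite dot_sym dot_lin (dot_sym _ G) (dot_sym (vsub xx Xh) G); ring.
rewrite /Eik.
have ESum : \big[Rplus/R0]_(j < m) (f (xnext j) - f xx)
    = \big[Rplus/R0]_(j < m) f (xnext j) - INR m * f xx.
  have -> : \big[Rplus/R0]_(j < m) (f (xnext j) - f xx)
      = \big[Rplus/R0]_(j < m) (f (xnext j) + (-1) * f xx).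
    by apply: eq_bigr => j _; ring.
  rewrite sumD sumZ sum_const_ord /Rminus; congr Rplus; ring.
rewrite ESum.
set SX := \big[Rplus/R0]_(j < m) f (xnext j) in SUM *.
set SW := \big[Rplus/R0]_(j < m) wnorm2 (fun i => L i + c) (vsub (xnext j) X) in SUM *.
set SB := \big[Rplus/R0]_(j < m) bdot (G j) (bsub (xnext j j) (xx j)) in SUM *.
set nH := norm2 (vsub (gradf X) G) in SUM PF1.
have KEY : Rabs Lr * INR tau * St = Lr * INR tau * St.
  case: (Rle_dec 0 Lr) => hl; first by rewrite Rabs_pos_eq.
  have -> : St = 0.
    rewrite /St big1 // => d _.
    apply: (norm2_zero_of_neg m n gradf Lr hLr); lra.
  ring.
have hM : 0 < INR m by apply: lt_0_INR; apply/ltP.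
have F1 : / (2 * c) * nH <= kappa * Lr * INR tau / alpha / 2 * St.
  apply: Rle_trans.
    apply: Rmult_le_compat_l; last exact: PF1.
    apply: Rlt_le; apply: Rinv_0_lt_compat; lra.
  rewrite /kappa /c. apply: Req_le. field. split; lra.
apply: Rle_ge.
match goal with |- ?B <= _ =>
  have -> : B = / INR m * (SX - INR m * f xx - (INR m - 1) * (f X - f xx) - / 2 * SW
     - (kappa * Lr * INR tau / alpha + 2 * Lr * INR tau) / 2 * St - / 2 * SLt)
    by field; lra
end.
apply: Rmult_le_compat_l; first by apply: Rlt_le; apply: Rinv_0_lt_compat.
have hnH : 0 <= nH by apply: norm2_ge0.
change (SX + -1 * (INR m * f X) + - / 2 * SW + - / (2 * c) * nH + dot G (vsub X xx) <= SB) in SUM.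
rewrite eG in SUM.
lra.
Qed.
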